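(* Consider, for parameters $p>0$ and $r>0$, the planar system $$\dot x = -x-y,\qquad \dot y = ry+px-x^2y .$$ (i) For each fixed $p>1$, as $r$ crosses $1$ the equilibrium $(0,0)$ undergoes a supercritical Hopf bifurcation (negative first Lyapunov coefficient), with natural frequency $\omega^*=\sqrt{p-1}$. (ii) For each fixed $r>1$, as $p$ crosses $1$ the two equilibria $(\pm\sqrt{r-p},\mp\sqrt{r-p})$ each undergo a subcritical Hopf bifurcation (positive first Lyapunov coefficient), with natural frequency $\omega^*=\sqrt{2(r-1)}$.
   Context: This is the simplified symmetric two-dimensional Maasch–Saltzman model. The equilibria $(\pm\sqrt{r-p},\mp\sqrt{r-p})$ exist when $r>p$. *)

(* Defs.v *)
From Stdlib Require Import Reals.
From Coquelicot Require Import Coquelicot.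
Open Scope R_scope.

(* A (one-parameter family of) planar vector field(s): mu -> x -> y -> (xdot, ydot). *)
Definition family := R -> R -> R -> R * R.

(* Partial derivatives of a scalar function of (x,y); false = d/dx, true = d/dy. *)
Definition pd (j : bool) (g : R -> R -> R) : R -> R -> R :=
  if j then (fun x y => Derive (fun t => g x t) y)
  else (fun x y => Derive (fun t => g t y) x).

Definition comp1 (f : R -> R -> R * R) : R -> R -> R := fun x y => fst (f x y).
Definition comp2 (f : R -> R -> R * R) : R -> R -> R := fun x y => snd (f x y).
Definition compi (i : bool) (f : R -> R -> R * R) : R -> R -> R :=
  if i then comp2 f else comp1 f.

Definition jac (f : R -> R -> R * R) (x0 y0 : R) (i j : bool) : R :=
  pd j (compi i f) x0 y0.

Definition jtrace (f : R -> R -> R * R) (x0 y0 : R) : R :=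
  jac f x0 y0 false false + jac f x0 y0 true true.
Definition jdet (f : R -> R -> R * R) (x0 y0 : R) : R :=
  jac f x0 y0 false false * jac f x0 y0 true true
  - jac f x0 y0 false true * jac f x0 y0 true false.

Definition CV := (C * C)%type.
Definition cvi (v : CV) (j : bool) : C := if j then snd v else fst v.
Definition cvconj (v : CV) : CV := (Cconj (fst v), Cconj (snd v)).
Definition cip (p q : CV) : C :=
  Cplus (Cmult (Cconj (fst p)) (fst q)) (Cmult (Cconj (snd p)) (snd q)).
Definition sumb (h : bool -> C) : C := Cplus (h false) (h true).

Definition jmul (f : R -> R -> R * R) (x0 y0 : R) (v : CV) : CV :=
  (sumb (fun j => Cmult (RtoC (jac f x0 y0 false j)) (cvi v j)),
   sumb (fun j => Cmult (RtoC (jac f x0 y0 true j)) (cvi v j))).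
Definition jtmul (f : R -> R -> R * R) (x0 y0 : R) (v : CV) : CV :=
  (sumb (fun j => Cmult (RtoC (jac f x0 y0 j false)) (cvi v j)),
   sumb (fun j => Cmult (RtoC (jac f x0 y0 j true)) (cvi v j))).

(* Solution of the 2x2 complex linear system M w = v (Cramer's rule). *)
Definition csolve (m11 m12 m21 m22 : C) (v : CV) : CV :=
  let d := Cminus (Cmult m11 m22) (Cmult m12 m21) in
  (Cdiv (Cminus (Cmult m22 (fst v)) (Cmult m12 (snd v))) d,
   Cdiv (Cminus (Cmult m11 (snd v)) (Cmult m21 (fst v))) d).

Definition jinv (f : R -> R -> R * R) (x0 y0 : R) (v : CV) : CV :=
  csolve (RtoC (jac f x0 y0 false false)) (RtoC (jac f x0 y0 false true))
         (RtoC (jac f x0 y0 true false)) (RtoC (jac f x0 y0 true true)) v.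

Definition jres2 (f : R -> R -> R * R) (x0 y0 w : R) (v : CV) : CV :=
  let tiw := Cmult (RtoC (2 * w)) Ci in
  csolve (Cminus tiw (RtoC (jac f x0 y0 false false)))
         (Copp (RtoC (jac f x0 y0 false true)))
         (Copp (RtoC (jac f x0 y0 true false)))
         (Cminus tiw (RtoC (jac f x0 y0 true true))) v.

Definition Bform (f : R -> R -> R * R) (x0 y0 : R) (u v : CV) : CV :=
  let Bi i := sumb (fun j => sumb (fun k =>
      Cmult (RtoC (pd j (pd k (compi i f)) x0 y0)) (Cmult (cvi u j) (cvi v k)))) in
  (Bi false, Bi true).
Definition Cform (f : R -> R -> R * R) (x0 y0 : R) (u v w : CV) : CV :=
  let Ci' i := sumb (fun j => sumb (fun k => sumb (fun l =>
      Cmult (RtoC (pd j (pd k (pd l (compi i f))) x0 y0))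
            (Cmult (cvi u j) (Cmult (cvi v k) (cvi w l)))))) in
  (Ci' false, Ci' true).

(** * First Lyapunov coefficient (Kuznetsov, Elements of Applied Bifurcation
    Theory, invariant formula):
    l1 = 1/(2w) Re( <p, C(q,q,qbar)> - 2 <p, B(q, A^{-1} B(q,qbar))>
                    + <p, B(qbar, (2iwI - A)^{-1} B(q,q))> )
    with A q = i w q, A^T p = -i w p, <p,q> = 1, <q,q> = 1. *)
Definition lyap_formula (f : R -> R -> R * R) (x0 y0 w : R) (q p : CV) : R :=
  let qb := cvconj q in
  / (2 * w) *
  Re (Cplus (Cminus (cip p (Cform f x0 y0 q q qb))
                    (Cmult (RtoC 2) (cip p (Bform f x0 y0 q (jinv f x0 y0 (Bform f x0 y0 q qb))))))
            (cip p (Bform f x0 y0 qb (jres2 f x0 y0 w (Bform f x0 y0 q q))))).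

Definition lyap_vectors (f : R -> R -> R * R) (x0 y0 w : R) (q p : CV) : Prop :=
  jmul f x0 y0 q = (Cmult (Cmult (RtoC w) Ci) (fst q), Cmult (Cmult (RtoC w) Ci) (snd q)) /\
  jtmul f x0 y0 p = (Cmult (Copp (Cmult (RtoC w) Ci)) (fst p),
                     Cmult (Copp (Cmult (RtoC w) Ci)) (snd p)) /\
  cip p q = RtoC 1 /\ cip q q = RtoC 1.

Definition is_first_lyap (f : R -> R -> R * R) (x0 y0 w l : R) : Prop :=
  exists q p, lyap_vectors f x0 y0 w q p /\ l = lyap_formula f x0 y0 w q p.

Definition hopf_point (F : family) (E : R -> R * R) (mu0 w : R) : Prop :=
  (exists delta, 0 < delta /\
     forall mu, Rabs (mu - mu0) < delta -> F mu (fst (E mu)) (snd (E mu)) = (0, 0)) /\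
  (* eigenvalues +- i w, w > 0, at mu0 *)
  0 < w /\
  jtrace (F mu0) (fst (E mu0)) (snd (E mu0)) = 0 /\
  jdet (F mu0) (fst (E mu0)) (snd (E mu0)) = w ^ 2 /\
  (* transversality: d/dmu Re lambda(mu) = d/dmu (trace J(mu))/2 <> 0 at mu0 *)
  (exists d, is_derive (fun mu => jtrace (F mu) (fst (E mu)) (snd (E mu)) / 2) mu0 d
             /\ d <> 0).

Definition supercritical_hopf (F : family) (E : R -> R * R) (mu0 w : R) : Prop :=
  hopf_point F E mu0 w /\
  exists l, is_first_lyap (F mu0) (fst (E mu0)) (snd (E mu0)) w l /\ l < 0.

Definition subcritical_hopf (F : family) (E : R -> R * R) (mu0 w : R) : Prop :=
  hopf_point F E mu0 w /\
  exists l, is_first_lyap (F mu0) (fst (E mu0)) (snd (E mu0)) w l /\ 0 < l.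

Definition MS (p r : R) : R -> R -> R * R :=
  fun x y => (- x - y, r * y + p * x - x ^ 2 * y).

(* Main.v *)
Require Import Defs.
From Stdlib Require Import Reals Lra FunctionalExtensionality.
From Stdlib.Reals Require Import Nsatz.
From Coquelicot Require Import Coquelicot.
Open Scope R_scope.

Lemma pdx_eq (g h : R -> R -> R) :
  (forall x y, is_derive (fun t => g t y) x (h x y)) -> pd false g = h.
Proof.
  intros H. apply functional_extensionality; intro x.
  apply functional_extensionality; intro y. simpl.
  apply is_derive_unique, H.
Qed.
Lemma pdy_eq (g h : R -> R -> R) :
  (forall x y, is_derive (fun t => g x t) y (h x y)) -> pd true g = h.
Proof.
  intros H. apply functional_extensionality; intro x.
  apply functional_extensionality; intro y. simpl.
  apply is_derive_unique, H.
Qed.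

Definition d1 (p r : R) (i j : bool) : R -> R -> R :=
  match i, j with
  | false, _ => fun _ _ => -1
  | true, false => fun x y => p - 2 * x * y
  | true, true => fun x y => r - x ^ 2
  end.
Definition d2 (p r : R) (i j k : bool) : R -> R -> R :=
  match i, j, k with
  | false, _, _ => fun _ _ => 0
  | true, false, false => fun x y => - 2 * y
  | true, true, true => fun _ _ => 0
  | true, _, _ => fun x y => - 2 * x
  end.
Definition d3 (p r : R) (i j k l : bool) : R -> R -> R :=
  match i, j, k, l with
  | true, true, false, false => fun _ _ => -2
  | true, false, true, false => fun _ _ => -2
  | true, false, false, true => fun _ _ => -2
  | _, _, _, _ => fun _ _ => 0
  end.

Lemma pd1 p r i j : pd j (compi i (MS p r)) = d1 p r i j.
Proof.
  destruct i, j; simpl; unfold comp1, comp2, MS; simpl;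
  first [apply pdx_eq | apply pdy_eq]; intros; auto_derive; auto; ring.
Qed.
Lemma pd2 p r i j k : pd j (pd k (compi i (MS p r))) = d2 p r i j k.
Proof.
  rewrite pd1.
  destruct i, j, k; simpl;
  first [apply pdx_eq | apply pdy_eq]; intros; auto_derive; auto; ring.
Qed.
Lemma pd3 p r i j k l : pd j (pd k (pd l (compi i (MS p r)))) = d3 p r i j k l.
Proof.
  rewrite pd2.
  destruct i, j, k, l; simpl;
  first [apply pdx_eq | apply pdy_eq]; intros; auto_derive; auto; ring.
Qed.

Definition qv (a w : R) : CV := (RtoC a, (-a, -a*w)).
Definition pv (a w : R) : CV := let k := / (2*w*a) in ((w*k, -k), (0, -k)).

Ltac unf := unfold lyap_formula, lyap_vectors, jtrace, jdet, jmul, jtmul, jinv, jres2, csolve, Bform, Cform, cip, sumb, cvi, cvconj, jac, qv, pv;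
  cbv beta; rewrite ?pd3, ?pd2, ?pd1; cbv beta; simpl;
  unfold Cplus, Cmult, Cminus, Copp, Cconj, Cdiv, Cinv, Re, RtoC, Ci; simpl.

Lemma part1_lyap (w a : R) : 0 < w -> 0 < a ->
  lyap_formula (MS (w^2+1) 1) 0 0 w (qv a w) (pv a w) = - a^2 / (2*w).
Proof.
  intros Hw Ha. assert (H2: 0 < w^2) by (apply pow_lt; lra). assert (H4: 0 < w^4) by (apply pow_lt; lra). unf.
  field; repeat split; try lra; intro Hc; ring_simplify in Hc; nra.
Qed.

Ltac pairs := repeat (apply injective_projections; simpl).

Lemma part1_vec (w a : R) : 0 < w -> 0 < a -> a^2 * (w^2+2) = 1 ->
  lyap_vectors (MS (w^2+1) 1) 0 0 w (qv a w) (pv a w).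
Proof.
  intros Hw Ha Hn. unf.
  repeat split; pairs; try (field; lra); try nra.
Qed.

Lemma part2_lyap (x w a : R) : 0 < w -> 0 < a -> x <> 0 -> w^2 = 2*x^2 ->
  lyap_formula (MS 1 (x^2+1)) x (-x) w (qv a w) (pv a w) = a^2 / w.
Proof.
  intros Hw Ha Hx Hr. assert (H2: 0 < x^2) by (apply pow2_gt_0; lra).
  assert (Hw2: 0 < w^2) by (apply pow_lt; lra).
  unf.
  field_simplify_eq.
  cbn [pow] in *; clear - Hr; nsatz. repeat split; try lra; intro Hc; ring_simplify in Hc; nra.
Qed.

Lemma part2_vec (x w a : R) : 0 < w -> 0 < a -> w^2 = 2*x^2 -> a^2 * (w^2+2) = 1 ->
  lyap_vectors (MS 1 (x^2+1)) x (-x) w (qv a w) (pv a w).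
Proof.
  intros Hw Ha Hr Hn. unf.
  repeat split; pairs; try (field; lra); try nra.
  all: field_simplify_eq; [cbn [pow] in *; clear - Hr Hn; nsatz | lra].
Qed.

Ltac jcomp := unfold jtrace, jdet, jac; cbv beta; rewrite ?pd1; simpl.

Lemma part1 (p : R) : 1 < p ->
  supercritical_hopf (fun r => MS p r) (fun _ => (0, 0)) 1 (sqrt (p - 1)).
Proof.
  intros Hp. assert (Hw: 0 < sqrt (p-1)) by (apply sqrt_lt_R0; lra).
  assert (Hw2: sqrt (p-1) ^ 2 = p - 1) by (apply pow2_sqrt; lra).
  split; [repeat split|].
  - exists 1; split; [lra|]. intros mu _. unfold MS; simpl. pairs; ring.
  - exact Hw.
  - jcomp. ring.
  - jcomp. simpl in Hw2. nra.
  - exists (1/2). split; [|lra].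
    apply is_derive_ext with (f := fun mu => (-1 + (mu - 0 ^ 2)) / 2).
    + intro t. jcomp. reflexivity.
    + auto_derive; auto; field.
  - set (w := sqrt (p-1)) in *. clearbody w.
    assert (Hp': p = w^2 + 1) by lra. subst p. simpl fst; simpl snd.
    assert (Hs: 0 < sqrt (w^2+2)) by (apply sqrt_lt_R0; nra).
    set (a := / sqrt (w^2+2)).
    assert (Ha: 0 < a) by (apply Rinv_0_lt_compat; lra).
    assert (Hn: a^2 * (w^2+2) = 1).
    { unfold a. rewrite <- (pow2_sqrt (w^2+2)) at 2 by nra. field. lra. }
    exists (- a^2 / (2*w)). split.
    + exists (qv a w), (pv a w). split; [apply part1_vec; auto|].
      symmetry; apply part1_lyap; auto.
    + assert (0 < a^2) by (apply pow_lt; lra).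
      apply Rdiv_neg_pos; lra.
Qed.

Lemma part2_lyap_ex (r x y : R) : 1 < r -> x^2 = r - 1 -> y = - x ->
  exists l, is_first_lyap (MS 1 r) x y (sqrt (2 * (r - 1))) l /\ 0 < l.
Proof.
  intros Hr Hx ->.
  assert (Hw: 0 < sqrt (2*(r-1))) by (apply sqrt_lt_R0; lra).
  assert (Hw2: sqrt (2*(r-1)) ^ 2 = 2*(r-1)) by (apply pow2_sqrt; lra).
  set (w := sqrt (2*(r-1))) in *. clearbody w.
  assert (Hr': r = x^2 + 1) by lra. subst r.
  assert (Hs: 0 < sqrt (w^2+2)) by (apply sqrt_lt_R0; nra).
  set (a := / sqrt (w^2+2)).
  assert (Ha: 0 < a) by (apply Rinv_0_lt_compat; lra).
  assert (Hn: a^2 * (w^2+2) = 1).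
  { unfold a. rewrite <- (pow2_sqrt (w^2+2)) at 2 by nra. field. lra. }
  assert (Hx0: x <> 0). { intro; subst x. lra. }
  exists (a^2 / w). split.
  - exists (qv a w), (pv a w). split; [apply part2_vec; auto; lra|].
    symmetry; apply part2_lyap; auto; lra.
  - assert (0 < a^2) by (apply pow_lt; lra).
    apply Rdiv_lt_0_compat; lra.
Qed.

Lemma part2_branch (r : R) (E : R -> R * R) : 1 < r ->
  (forall mu, mu < r -> fst (E mu) ^ 2 = r - mu /\ snd (E mu) = - fst (E mu)) ->
  subcritical_hopf (fun p => MS p r) E 1 (sqrt (2 * (r - 1))).
Proof.
  intros Hr HE.
  assert (Hw: 0 < sqrt (2*(r-1))) by (apply sqrt_lt_R0; lra).
  assert (Hw2: sqrt (2*(r-1)) ^ 2 = 2*(r-1)) by (apply pow2_sqrt; lra).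
  destruct (HE 1 Hr) as [H1 H2].
  split; [repeat split|].
  - exists (r - 1); split; [lra|]. intros mu Hmu.
    assert (Hmr: mu < r) by (apply Rabs_def2 in Hmu; lra).
    destruct (HE mu Hmr) as [E1 E2]. rewrite E2.
    unfold MS. rewrite E1. pairs; ring.
  - exact Hw.
  - jcomp. try rewrite H2. simpl in H1. nra.
  - jcomp. try rewrite H2. simpl in H1, Hw2. nra.
  - exists (1/2). split; [|lra].
    apply is_derive_ext_loc with (f := fun mu => (mu - 1) / 2).
    + exists (mkposreal (r - 1) ltac:(lra)). intros t Ht.
      unfold ball in Ht; simpl in Ht; unfold AbsRing_ball, abs, minus, plus, opp in Ht; simpl in Ht.
      apply Rabs_def2 in Ht.
      destruct (HE t ltac:(lra)) as [E1 E2].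
      jcomp. try rewrite E2. simpl in E1. nra.
    + auto_derive; auto; field.
  - apply part2_lyap_ex; auto.
Qed.

Theorem mainTheorem2 :
  (forall p : R, 1 < p ->
     supercritical_hopf (fun r => MS p r) (fun _ => (0, 0)) 1 (sqrt (p - 1))) /\
  (forall r : R, 1 < r ->
     subcritical_hopf (fun p => MS p r) (fun p => (sqrt (r - p), - sqrt (r - p))) 1
       (sqrt (2 * (r - 1))) /\
     subcritical_hopf (fun p => MS p r) (fun p => (- sqrt (r - p), sqrt (r - p))) 1
       (sqrt (2 * (r - 1)))).
Proof.
  split; [exact part1|].
  intros r Hr. split; apply part2_branch; auto; intros mu Hmu; simpl; split.
  - apply pow2_sqrt; lra.
  - reflexivity.
  - assert (h := sqrt_sqrt (r - mu) ltac:(lra)). nra.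
  - ring.
Qed.
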